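(* Let $n \ge 3$ and $k = \lceil \log_2 n \rceil$. Then $\det'(Q_n) = k$ if $2^{k-1} < n \le 2^{k-1} + k$, and $\det'(Q_n) = k+1$ if $2^{k-1} + k < n \le 2^k$.
   Context: $Q_n$ is the $n$-dimensional hypercube: its vertices are the binary strings of length $n$, two being adjacent iff they differ in exactly one bit. For a graph $G$ with at most one isolated vertex and no component isomorphic to $K_2$, an edge subset $T$ is an edge determining set if the only automorphism $\phi$ of $G$ satisfying $\{\phi(u),\phi(v)\}=\{u,v\}$ for all $\{u,v\}\in T$ is the identity; the determining index $\det'(G)$ is the minimum size of an edge determining set. *)

(* Defs.v *)
From mathcomp Require Import all_boot all_order all_fingroup.
Set Implicit Arguments. Unset Strict Implicit. Unset Printing Implicit Defensive.

Definition qvert (n : nat) := {ffun 'I_n -> bool}.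

Definition qadj (n : nat) (u v : qvert n) : bool :=
  #|[set i : 'I_n | u i != v i]| == 1.

Definition qedges (n : nat) : {set {set qvert n}} :=
  [set e : {set qvert n} | [exists u, exists v, qadj u v && (e == [set u; v])]].

Definition qaut (n : nat) (f : {perm qvert n}) : bool :=
  [forall u, forall v, qadj (f u) (f v) == qadj u v].

Definition edge_determining (n : nat) (T : {set {set qvert n}}) : bool :=
  (T \subset qedges n) &&
  [forall f : {perm qvert n},
     (qaut f && [forall e in T, f @: e == e]) ==> (f == 1%g)].

(* Determining index det'(Q_n): the minimum size of an edge determining set
   (the default value #|E(Q_n)| is attained by E(Q_n) itself when it is
   determining, so this is the true minimum whenever one exists). *)
Definition det_index (n : nat) : nat :=
  \big[minn/#|qedges n|]_(T : {set {set qvert n}} | edge_determining T) #|T|.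

(* Main.v *)
Require Import Defs.
From mathcomp Require Import all_boot all_order all_fingroup zify.
Set Implicit Arguments. Unset Strict Implicit. Unset Printing Implicit Defensive.

Definition flip {n} (a : 'I_n) (u : qvert n) : qvert n := [ffun i => u i (+) (i == a)].

Lemma flipE n (a : 'I_n) u i : flip a u i = u i (+) (i == a).
Proof. by rewrite ffunE. Qed.

Lemma qadjP n (u v : qvert n) : reflect (exists a, v = flip a u) (qadj u v).
Proof.
apply: (iffP cards1P) => [[a Ha] | [a ->]].
  exists a; apply/ffunP => i; rewrite flipE.
  move/setP: Ha => /(_ i); rewrite !inE /= => <-.
  by case: (u i); case: (v i).
exists a; apply/setP => i; rewrite !inE flipE.
by case: (u i); case: (i == a).
Qed.

Lemma flipK n (a : 'I_n) : involutive (flip a).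
Proof. by move=> u; apply/ffunP => i; rewrite !flipE -addbA addbb addbF. Qed.

Lemma flip_neq n (a : 'I_n) u : flip a u != u.
Proof. apply/eqP => /ffunP /(_ a); rewrite flipE eqxx; by case: (u a). Qed.

Lemma flip_inj_idx n (a b : 'I_n) u : flip a u = flip b u -> a = b.
Proof.
move=> /ffunP /(_ a); rewrite !flipE eqxx => H.
apply/eqP; move: H; case: (u a); case: (a == b) => //=; by case.
Qed.

Lemma flip2_idx n (a b : 'I_n) u : flip a (flip b u) = u -> a = b.
Proof. move=> H; apply: (@flip_inj_idx _ a b (flip b u)); by rewrite H flipK. Qed.

Lemma flipC n (a b : 'I_n) u : flip a (flip b u) = flip b (flip a u).
Proof. apply/ffunP => i; rewrite !flipE; by rewrite -!addbA (addbC (i == b)). Qed.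

Lemma common_nb n (a b : 'I_n) (y w : qvert n) : a != b ->
  qadj y w -> qadj (flip b (flip a y)) w -> w = flip a y \/ w = flip b y.
Proof.
move=> ab /qadjP [c ->] /qadjP [d Hd].
have Ha := congr1 (fun z : qvert n => z a) Hd.
have Hb := congr1 (fun z : qvert n => z b) Hd.
move: Ha Hb; rewrite /= !flipE eqxx (eq_sym b a) (negbTE ab) eqxx.
case: (eqVneq c a) => [-> | ca]; first by left.
case: (eqVneq d a) => [da | da]; last first.
  by case: (y a).
subst d; case: (eqVneq c b) => [-> | cb]; first by right.
by rewrite eq_sym (negbTE ab); case: (y b).
Qed.

Lemma edge_dir n (a b : 'I_n) u v : [set u; flip a u] = [set v; flip b v] -> a = b.
Proof.
move=> E.
have Hu : u \in [set v; flip b v] by rewrite -E !inE eqxx.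
have Hf : flip a u \in [set v; flip b v] by rewrite -E !inE eqxx orbT.
move: Hu Hf; rewrite !inE => /orP [] /eqP -> /orP [] /eqP.
- by move=> H; move: (flip_neq a v); rewrite H eqxx.
- by move/flip_inj_idx.
- by move/flip2_idx.
- by move=> H; move: (flip_neq a (flip b v)); rewrite H eqxx.
Qed.

Definition amap {n} (s : {perm 'I_n}) (t : qvert n) (x : qvert n) : qvert n :=
  [ffun c => x (s c) (+) t c].

Definition qz n : qvert n := [ffun => false].

Lemma qadj_sym n (u v : qvert n) : qadj u v = qadj v u.
Proof. by rewrite /qadj; congr (_ == 1); apply: eq_card => i; rewrite !inE eq_sym. Qed.

Lemma amap_adj n s t (u v : qvert n) : qadj (amap s t u) (amap s t v) = qadj u v.
Proof.
rewrite /qadj.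
have -> : [set c | amap s t u c != amap s t v c] = s @^-1: [set i | u i != v i].
  apply/setP => c; rewrite !inE !ffunE.
  by case: (t c); case: (u (s c)); case: (v (s c)).
by rewrite card_preimset //; apply: perm_inj.
Qed.

Lemma perm_eqV n (s : {perm 'I_n}) c a : (s c == a) = (c == (s^-1)%g a).
Proof. by apply/eqP/eqP => [<- | ->]; rewrite ?permK ?permKV. Qed.

Lemma amap_flip n s t a (x : qvert n) : amap s t (flip a x) = flip ((s^-1)%g a) (amap s t x).
Proof.
apply/ffunP => c; rewrite !ffunE perm_eqV.
by rewrite -!addbA (addbC (c == _)).
Qed.

Lemma amap_inj n s (t : qvert n) : injective (amap s t).
Proof.
move=> x y /ffunP H; apply/ffunP => i.
have := H ((s^-1)%g i); rewrite !ffunE permKV.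
by case: (t _); case: (x i); case: (y i).
Qed.

Lemma amap_z n (s : {perm 'I_n}) : amap s (qz n) (qz n) = qz n.
Proof. by apply/ffunP => c; rewrite !ffunE. Qed.

Definition wt n (x : qvert n) := #|[set i | x i]|.

Lemma wt0 n (x : qvert n) : wt x = 0 -> x = qz n.
Proof.
move/eqP; rewrite cards_eq0 => /eqP /setP H; apply/ffunP => i.
by have := H i; rewrite !inE ffunE => ->.
Qed.

Lemma wt_flip n (a : 'I_n) (x : qvert n) : x a -> wt (flip a x) = (wt x).-1.
Proof.
move=> xa; rewrite /wt (cardsD1 a [set i | x i]) inE xa /=.
apply: eq_card => i; rewrite !inE flipE.
by case: (eqVneq i a) => [->|] /=; [rewrite xa | rewrite addbF].
Qed.

Lemma qaut_char n (f : {perm qvert n}) : qaut f ->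
  exists s t, forall x, f x = amap s t x.
Proof.
move=> /forallP fa.
have fadj u v : qadj (f u) (f v) = qadj u v.
  by have /forallP/(_ v)/eqP := fa u.
pose z := qz n; pose t := f z.
pose g x := amap 1%g t (f x).
have gadj u v : qadj (g u) (g v) = qadj u v by rewrite amap_adj fadj.
have ginj : injective g by move=> x y /amap_inj /perm_inj.
have gz : g z = z by apply/ffunP => c; rewrite !ffunE perm1 addbb.
have ex a : exists b, g (flip a z) == flip b z.
  have : qadj z (g (flip a z)) by rewrite -{1}gz gadj; apply/qadjP; exists a.
  by move/qadjP => [b ->]; exists b.
pose p a := odflt a [pick b | g (flip a z) == flip b z].
have pP a : g (flip a z) = flip (p a) z.
  rewrite /p; case: pickP => [b /eqP //|H].
  by case: (ex a) => b; rewrite H.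
have pinj : injective p.
  by move=> a b E; apply: (@flip_inj_idx _ a b z); apply: ginj; rewrite !pP E.
pose sp := perm pinj; pose s := (sp^-1)%g.
pose P := amap s z.
have PE a : (s^-1)%g a = p a by rewrite invgK permE.
suff gP : forall x, g x = P x.
  exists s, t => x; apply/ffunP => c.
  have := gP x => /ffunP /(_ c); rewrite !ffunE perm1 => H.
  by move: H; rewrite /t; case: (f x c); case: (f z c); case: (x (s c)).
suff W : forall w x, wt x <= w -> g x = P x by move=> x; apply: (W (wt x)).
elim=> [|w IH] x.
  by rewrite leqn0 => /eqP /wt0 ->; rewrite gz /P amap_z.
rewrite leq_eqVlt ltnS => /orP [/eqP Hw | ]; last exact: IH.
case: w IH Hw => [|w] IH Hw.
  have : qadj z x.
    rewrite /qadj -[X in _ == X]Hw /wt; apply/eqP; apply: eq_card => i.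
    by rewrite !inE /z ffunE; case: (x i).
  move/qadjP => [a ->]; by rewrite pP /P amap_flip amap_z PE.
have : 1 < #|[set i | x i]| by rewrite -/(wt x) Hw.
move/card_gt1P => [a [b [xa xb ab]]]; rewrite !inE in xa xb.
pose y1 := flip a x; pose y2 := flip b x.
have wy1 : wt y1 = w.+1 by rewrite /y1 wt_flip // Hw.
have wy2 : wt y2 = w.+1 by rewrite /y2 wt_flip // Hw.
have Gy1 := IH y1 (eq_leq wy1). have Gy2 := IH y2 (eq_leq wy2).
have zz : wt (flip a y2) <= w.+1.
  by rewrite wt_flip ?wy2 // /y2 flipE xa (negbTE ab).
have Gzz := IH _ zz.
have A1 : qadj (P y1) (g x) by rewrite -Gy1 gadj qadj_sym; apply/qadjP; exists a.
have A2 : qadj (flip (p b) (flip (p a) (P y1))) (g x).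
  rewrite -PE -[p a]PE -!amap_flip /y1 flipK.
  by rewrite -/P -/y2 -Gy2 gadj qadj_sym; apply/qadjP; exists b.
have pab : p a != p b by apply: contra ab => /eqP /pinj ->.
case: (common_nb pab A1 A2) => [->|].
  by rewrite -PE -amap_flip /y1 flipK.
rewrite -PE -amap_flip /y1 -flipC (_ : amap s z _ = P (flip a y2)) // -Gzz => /ginj E.
by move: ab; rewrite (flip2_idx (esym E)) eqxx.
Qed.

Lemma bits_inj k j j' : j < 2 ^ k -> j' < 2 ^ k ->
  (forall i, i < k -> odd (j %/ 2 ^ i) = odd (j' %/ 2 ^ i)) -> j = j'.
Proof.
elim: k j j' => [|k IH] j j'.
  by rewrite expn0 !ltnS !leqn0 => /eqP -> /eqP ->.
move=> hj hj' H.
have H0 := H 0 isT; rewrite expn0 !divn1 in H0.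
have Hh : half j = half j'.
  apply: (IH (half j) (half j')).
  - by rewrite -divn2 ltn_divLR // -expnSr.
  - by rewrite -divn2 ltn_divLR // -expnSr.
  by move=> i ik; have := H i.+1 ik; rewrite expnS !divnMA !divn2.
by rewrite -(odd_double_half j) -(odd_double_half j') H0 Hh.
Qed.

Definition ucol (j r : nat) : bool := (0 < r) && odd (j %/ 2 ^ r.-1).

Definition urep {n} (m : nat) (r : 'I_n) : qvert n :=
  [ffun c : 'I_n => (m <= c) && ucol (c - m) r].

Definition qedge {n} (m : nat) (r : 'I_n) : {set qvert n} :=
  [set urep m r; flip r (urep m r)].

Definition T0 {n} (m : nat) (mn : m <= n) : {set {set qvert n}} :=
  [set qedge m (widen_ord mn r) | r : 'I_m].

Lemma T0_card n m (mn : m <= n) : #|T0 mn| = m.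
Proof.
rewrite card_imset ?card_ord // => a b /edge_dir /(congr1 val) /= ab.
by apply: val_inj.
Qed.

Lemma T0_sub n m (mn : m <= n) : T0 mn \subset qedges n.
Proof.
apply/subsetP => e /imsetP [r _ ->]; rewrite inE.
apply/existsP; exists (urep m (widen_ord mn r)); apply/existsP.
exists (flip (widen_ord mn r) (urep m (widen_ord mn r))).
by rewrite eqxx andbT; apply/qadjP; eexists.
Qed.

Lemma fix_edge n s (t : qvert n) r u :
  amap s t @: [set u; flip r u] = [set u; flip r u] ->
  ((s^-1)%g r = r) /\ (forall c, c != r -> amap s t u c = u c).
Proof.
rewrite imsetU1 imset_set1 amap_flip => E; split.
  exact: (edge_dir E).
have : amap s t u \in [set u; flip r u] by rewrite -E !inE eqxx.
rewrite !inE => /orP [/eqP -> // | /eqP -> c cr].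
by rewrite flipE (negbTE cr) addbF.
Qed.

Lemma T0_det n m (mn : m <= n) : 2 <= m -> n <= 2 ^ m.-1 + m ->
  edge_determining (T0 mn).
Proof.
move=> m2 nb; rewrite /edge_determining T0_sub /=.
apply/forallP => f; apply/implyP => /andP [fa /forallP fe].
have [s [t fE]] := qaut_char fa.
have fix_r (r : 'I_n) : r < m ->
    ((s^-1)%g r = r) /\ (forall c, c != r -> amap s t (urep m r) c = urep m r c).
  move=> rm; apply: fix_edge.
  have := fe (qedge m r); rewrite (_ : qedge m r \in T0 mn).
    rewrite /= /qedge => /eqP E; rewrite -[RHS]E; apply: eq_imset => x; by rewrite fE.
  by apply/imsetP; exists (Ordinal rm) => //; congr qedge; apply: val_inj.
have H1 (r : 'I_n) : r < m -> s r = r.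
  by move=> rm; case: (fix_r r rm) => E _; rewrite -{1}E permKV.
have H2 (r c : 'I_n) : r < m -> c != r -> urep m r (s c) (+) t c = urep m r c.
  by move=> rm cr; case: (fix_r r rm) => _ /(_ c cr); rewrite ffunE.
have n0 : 0 < n by lia.
have n1 : 1 < n by lia.
pose r0 : 'I_n := Ordinal n0. pose r1 : 'I_n := Ordinal n1.
have big (c : 'I_n) : m <= c -> s c = c /\ t c = false.
  move=> mc.
  have mc' : m <= s c.
    rewrite leqNgt; apply/negP => scm.
    have := H1 _ scm => /perm_inj E; move: scm; rewrite E; lia.
  have tc : t c = false.
    have cr0 : c != r0 by apply/eqP => /(congr1 val) /=; lia.
    have := H2 r0 c (leq_trans (isT : 0 < 2) m2) cr0.
    by rewrite !ffunE /ucol /= !andbF.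
  split => //; apply: val_inj => /=.
  suff : s c - m = c - m by lia.
  have := ltn_ord (s c); have := ltn_ord c; move=> hc hsc.
  apply: (@bits_inj m.-1); [lia | lia | move=> i im].
  have im' : i.+1 < n by lia.
  have im2 : i.+1 < m by lia.
  have ci : c != Ordinal im' by apply/eqP => /(congr1 val) /=; lia.
  have := H2 (Ordinal im') c im2 ci.
  by rewrite !ffunE tc addbF mc mc' /ucol /=.
have sid : s = 1%g.
  apply/permP => c; rewrite perm1; case: (leqP m c) => [/big [] // | cm].
  exact: H1.
have tz c : t c = false.
  case: (leqP m c) => [/big [] // | cm].
  pose r := if c == r0 then r1 else r0.
  have rm : r < m by rewrite /r; case: (c == r0) => /=; lia.
  have cr : c != r.
    rewrite /r; case: (eqVneq c r0) => [-> | //].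
    by apply/eqP => /(congr1 val).
  have := H2 r c rm cr; rewrite sid perm1.
  by case: (urep m r c); case: (t c).
apply/eqP/permP => x; rewrite perm1 fE; apply/ffunP => c.
by rewrite ffunE sid perm1 tz addbF.
Qed.

Lemma swap_nondet n (T : {set {set qvert n}}) (i j : 'I_n) b : i != j ->
  (forall e, e \in T -> forall x, x \in e -> x i (+) x j = b) ->
  ~~ edge_determining T.
Proof.
move=> ij H.
pose tb : qvert n := [ffun c => b && ((c == i) || (c == j))].
pose phi := perm (@amap_inj n (tperm i j) tb).
have phiE x : phi x = amap (tperm i j) tb x by rewrite permE.
have fixx (x : qvert n) : x i (+) x j = b -> phi x = x.
  move=> Hx; apply/ffunP => c; rewrite phiE !ffunE.
  case: (eqVneq c i) => [-> | ci].
    by rewrite tpermL /= andbT -Hx; case: (x i); case: (x j).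
  case: (eqVneq c j) => [-> | cj].
    by rewrite tpermR /= -Hx; case: (x i); case: (x j).
  by rewrite tpermD 1?eq_sym // andbF addbF.
apply/negP => /andP [_ /forallP /(_ phi) /implyP].
have -> : qaut phi by apply/forallP => u; apply/forallP => v; rewrite !phiE amap_adj.
have -> /= : [forall e in T, phi @: e == e].
  apply/forallP => e; apply/implyP => eT; apply/eqP; rewrite -[RHS]imset_id.
  by apply: eq_in_imset => x xe /=; apply: fixx; apply: (H e eT).
move=> /(_ isT) /eqP /permP /(_ (if b then qz n else flip i (qz n))).
rewrite perm1 phiE => /ffunP /(_ i); rewrite !ffunE /tb tpermL eqxx /=.
by destruct b; rewrite !ffunE //= eq_sym (negbTE ij) eqxx.
Qed.

Lemma edge_shape n (e : {set qvert n}) : e \in qedges n -> exists u a, e = [set u; flip a u].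
Proof.
rewrite inE => /existsP [u /existsP [v /andP [/qadjP [a ->] /eqP ->]]].
by exists u, a.
Qed.

Lemma edge_diff n u (a : 'I_n) (x y : qvert n) c :
  x \in [set u; flip a u] -> y \in [set u; flip a u] -> x c != y c -> c = a.
Proof.
rewrite !inE => /orP [] /eqP -> /orP [] /eqP ->; rewrite ?eqxx // flipE;
  by case: (eqVneq c a) => //; rewrite addbF eqxx.
Qed.

Definition rep n (e : {set qvert n}) : qvert n := odflt (qz n) [pick x in e].

Lemma rep_in n (e : {set qvert n}) : e \in qedges n -> rep e \in e.
Proof.
move=> /edge_shape [u [a ->]]; rewrite /rep; case: pickP => [x // | H].
by have := H u; rewrite !inE eqxx.
Qed.

Lemma lower n (T : {set {set qvert n}}) : T \subset qedges n -> 1 < n ->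
  2 ^ (#|T|.-1) + #|T| < n -> ~~ edge_determining T.
Proof.
move=> TQ n1 nb.
have [T0 | [e0 e0T]] := set_0Vmem T.
  apply: (@swap_nondet _ _ (Ordinal (ltnW n1)) (Ordinal n1) false) => //.
  by move=> e; rewrite T0 inE.
pose D := [set c : 'I_n | [exists e in T, exists x in e, x c != rep e c]].
pose edir (e : {set qvert n}) := [pick c | [exists x in e, x c != rep e c]].
have Dsub : [set Some c | c in D] \subset [set edir e | e in T].
  apply/subsetP => oc /imsetP [c]; rewrite inE => /exists_inP [e eT /exists_inP [x xe xc]] ->.
  apply/imsetP; exists e => //.
  have eQ := subsetP TQ e eT.
  have [u [a Ee]] := edge_shape eQ.
  have rin : rep e \in [set u; flip a u] by rewrite -Ee; exact: rep_in eQ.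
  have xe' : x \in [set u; flip a u] by rewrite -Ee.
  have -> := edge_diff xe' rin xc.
  rewrite /edir; case: pickP => [c' /exists_inP [y ye yc] | H].
    have ye' : y \in [set u; flip a u] by rewrite -Ee.
    by rewrite (edge_diff ye' rin yc).
  by have := H c; move/negbT/negP; case; apply/exists_inP; exists x.
have cardD : #|D| <= #|T|.
  have := subset_leq_card Dsub; rewrite card_imset; last by move=> ? ? [].
  move/leq_trans; apply; exact: leq_imset_card.
have ND c e x : c \notin D -> e \in T -> x \in e -> x c = rep e c.
  move=> cD eT xe; apply/eqP; apply: contraR cD => xc; rewrite inE.
  by apply/exists_inP; exists e => //; apply/exists_inP; exists x.
pose col (c : 'I_n) := [set e in T | rep e c != rep e0 c].
have colsub : [set col c | c in ~: D] \subset powerset (T :\ e0).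
  apply/subsetP => S /imsetP [c _ ->]; rewrite inE; apply/subsetP => e.
  rewrite !inE => /andP [eT ne]; rewrite eT andbT.
  by apply: contraNneq ne => ->; rewrite eqxx.
have cT : #|T| = (#|T :\ e0|).+1 by rewrite (cardsD1 e0 T) e0T.
have cND : #|~: D| = n - #|D|.
  by have := cardsC D; rewrite card_ord; lia.
have [/existsP [i /existsP [j /and4P [iD jD ij /eqP cij]]] | H] :=
  boolP [exists i, exists j, [&& i \in ~: D, j \in ~: D, i != j & col i == col j]].
  rewrite !in_setC in iD jD.
  apply: (@swap_nondet _ _ i j (rep e0 i (+) rep e0 j)) => // e eT x xe.
  rewrite (ND i e x iD eT xe) (ND j e x jD eT xe).
  move/setP: cij => /(_ e); rewrite !inE eT /=.
  by case: (rep e i); case: (rep e j); case: (rep e0 i); case: (rep e0 j).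
exfalso.
have inj : {in ~: D &, injective col}.
  move=> i j iD jD E; apply/eqP; apply: contraT => ij.
  move/negP: H => nH; exfalso; apply: nH; apply/existsP; exists i; apply/existsP; exists j.
  by rewrite iD jD ij E eqxx.
have := subset_leq_card colsub; rewrite card_in_imset // card_powerset cND.
rewrite cT /= in nb cardD; move: nb cardD; set a := #|T :\ e0|; set d := #|D|; set P := 2 ^ a => h1 h2 h3. clearbody a d P; lia.
Qed.

Lemma bigmin_le (I : eqType) (r : seq I) (P : pred I) (F : I -> nat) d i :
  i \in r -> P i -> \big[minn/d]_(j <- r | P j) F j <= F i.
Proof.
elim: r => // x r IH; rewrite inE big_cons => /orP [/eqP <- | ir] Pi.
  by rewrite Pi geq_minl.
by case: (P x); rewrite ?geq_min IH ?orbT.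
Qed.

Lemma det_eq n m (T0 : {set {set qvert n}}) : edge_determining T0 -> #|T0| = m ->
  (forall T : {set {set qvert n}}, edge_determining T -> m <= #|T|) -> det_index n = m.
Proof.
move=> dT0 cT0 low; apply/eqP; rewrite eqn_leq; apply/andP; split.
  by rewrite /det_index -cT0; apply: bigmin_le => //; exact: mem_index_enum.
apply: (big_ind (fun x => m <= x)) => //.
- rewrite -cT0; apply: subset_leq_card; by case/andP: dT0.
- by move=> x y hx hy; rewrite leq_min hx hy.
Qed.

Lemma pow_bound t : 2 ^ t.-1 + t <= 2 ^ t.
Proof.
case: t => [|s] //=; rewrite expnS mul2n -addnn leq_add2l.
exact: ltn_expl.
Qed.

Lemma le_pow_pred t : t <= 2 ^ t.-1.
Proof. by case: t => [|t] //=; exact: ltn_expl. Qed.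

Theorem corollary3 (n : nat) : 3 <= n ->
  let k := up_log 2 n in
  ((2 ^ k.-1 < n <= 2 ^ k.-1 + k) -> det_index n = k) /\
  ((2 ^ k.-1 + k < n <= 2 ^ k) -> det_index n = k.+1).
Proof.
move=> n3 k.
have nk : n <= 2 ^ k by apply: up_logP.
have k2 : 2 <= k.
  rewrite leqNgt; apply/negP => k1; move: nk.
  have : 2 ^ k <= 2 ^ 1 by apply: leq_pexp2l => //; rewrite -ltnS.
  move=> h1 h2; have := leq_trans h2 h1; rewrite expn1; lia.
have n1 : 1 < n by lia.
have kk : k <= 2 ^ k.-1 by apply: le_pow_pred.
split => /andP [lo hi].
- have kn : k <= n by apply: leq_trans kk (ltnW lo).
  apply: (det_eq (T0_det kn k2 hi)); first exact: T0_card.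
  move=> T dT; rewrite leqNgt; apply/negP => tk.
  have TQ : T \subset qedges n by case/andP: dT.
  move: dT; apply/negP; apply: lower => //.
  apply: leq_ltn_trans (pow_bound _) _.
  apply: leq_ltn_trans lo; apply: leq_pexp2l => //; lia.
- have kn : k.+1 <= n by lia.
  have hi' : n <= 2 ^ k.+1.-1 + k.+1 by rewrite /=; lia.
  apply: (det_eq (T0_det kn (ltnW k2) hi')); first exact: T0_card.
  move=> T dT; rewrite leqNgt; apply/negP => tk.
  have TQ : T \subset qedges n by case/andP: dT.
  move: dT; apply/negP; apply: lower => //.
  apply: leq_ltn_trans lo; apply: leq_add; last by lia.
  apply: leq_pexp2l => //; lia.
Qed.
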